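(* Let $K$ be a ring with unit and let $M\subseteq M_n(K)$ be a monoid (under matrix multiplication, containing the identity) consisting of block upper triangular matrices of the form $\begin{pmatrix} A & B\\ 0 & C\end{pmatrix}$ with $A\in M_m(K)$, $C\in M_r(K)$, $B\in M_{m,r}(K)$, $m+r=n$. Let $\varphi\colon M\to M_m(K)\times M_r(K)$ be the projection $\begin{pmatrix} A & B\\ 0 & C\end{pmatrix}\mapsto (A,C)$ to the diagonal blocks, and set $N=\varphi(M)$. Then for all $n_1,n_2\in N$, the monoid $\mathrm{tr}_{\varphi}(n_1,n_2)$ embeds (via an injective monoid homomorphism) in the additive group $M_{m,r}(K)$ of $m\times r$ matrices over $K$.
   Context: For a monoid homomorphism $\varphi\colon M\to N$ and $(n_1,n_2)\in N\times N$, the trace $\mathrm{tr}_{\varphi}(n_1,n_2)$ is the quotient of the submonoid $\{m\in M\mid n_1\varphi(m)=n_1,\ \varphi(m)n_2=n_2\}$ of $M$ by the congruence $\equiv$ defined by $m\equiv m'$ if and only if $m_1mm_2=m_1m'm_2$ for all $m_1\in\varphi^{-1}(n_1)$ and all $m_2\in\varphi^{-1}(n_2)$. Here $N=\varphi(M)$ is a submonoid of the product monoid $M_m(K)\times M_r(K)$. *)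

(* Defs.v *)
From HB Require Import structures.
From mathcomp Require Import all_boot all_order all_algebra.
Set Implicit Arguments. Unset Strict Implicit. Unset Printing Implicit Defensive.
Import GRing.Theory.
Local Open Scope ring_scope.

Definition block_ut (K : pzRingType) (m r : nat) (x : 'M[K]_(m + r)) : Prop :=
  dlsubmx x = 0.

Definition phi (K : pzRingType) (m r : nat) (x : 'M[K]_(m + r))
  : 'M[K]_m * 'M[K]_r := (ulsubmx x, drsubmx x).

Definition pmul (K : pzRingType) (m r : nat) (a b : 'M[K]_m * 'M[K]_r)
  : 'M[K]_m * 'M[K]_r := (a.1 *m b.1, a.2 *m b.2).

Definition in_image (K : pzRingType) (m r : nat) (M : 'M[K]_(m + r) -> Prop)
  (n : 'M[K]_m * 'M[K]_r) : Prop := exists x, M x /\ phi x = n.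

Definition trace_sub (K : pzRingType) (m r : nat) (M : 'M[K]_(m + r) -> Prop)
  (n1 n2 : 'M[K]_m * 'M[K]_r) (x : 'M[K]_(m + r)) : Prop :=
  M x /\ pmul n1 (phi x) = n1 /\ pmul (phi x) n2 = n2.

(* the congruence defining tr_phi(n1,n2) *)
Definition trace_equiv (K : pzRingType) (m r : nat) (M : 'M[K]_(m + r) -> Prop)
  (n1 n2 : 'M[K]_m * 'M[K]_r) (x y : 'M[K]_(m + r)) : Prop :=
  forall m1 m2, M m1 -> phi m1 = n1 -> M m2 -> phi m2 = n2 ->
    m1 *m x *m m2 = m1 *m y *m m2.

(* Main.v *)
Require Import Defs.
From HB Require Import structures.
From mathcomp Require Import all_boot all_order all_algebra.
Import GRing.Theory.
Set Implicit Arguments.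
Local Open Scope ring_scope.

Section H.
Variables (K : pzRingType) (m r : nat).
Implicit Types x y : 'M[K]_(m + r).

Lemma utE x : block_ut x -> x = block_mx (ulsubmx x) (ursubmx x) 0 (drsubmx x).
Proof. by move=> h; rewrite -{1}[x]submxK h. Qed.

Lemma mulE x y : block_ut x -> block_ut y ->
  x *m y = block_mx (ulsubmx x *m ulsubmx y)
                    (ulsubmx x *m ursubmx y + ursubmx x *m drsubmx y) 0
                    (drsubmx x *m drsubmx y).
Proof.
move=> hx hy; rewrite {1}(utE hx) {1}(utE hy) mulmx_block.
by rewrite !mul0mx !mulmx0 !addr0 add0r.
Qed.

Lemma mul_ut x y : block_ut x -> block_ut y -> block_ut (x *m y).
Proof. by move=> hx hy; rewrite /block_ut (mulE hx hy) block_mxKdl. Qed.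

Lemma key (A1 : 'M[K]_m) (C1 : 'M[K]_r) (A2 : 'M[K]_m) (C2 : 'M[K]_r) m1 x m2 :
  block_ut m1 -> block_ut x -> block_ut m2 ->
  ulsubmx m1 = A1 -> drsubmx m1 = C1 -> ulsubmx m2 = A2 -> drsubmx m2 = C2 ->
  A1 *m ulsubmx x = A1 -> drsubmx x *m C2 = C2 ->
  m1 *m x *m m2 = block_mx (A1 *m A2)
     (A1 *m ursubmx m2 + A1 *m ursubmx x *m C2 + ursubmx m1 *m C2) 0 (C1 *m C2).
Proof.
move=> u1 ux u2 e1 e2 e3 e4 h1 h2.
rewrite (mulE (mul_ut u1 ux) u2) (mulE u1 ux) !block_mxKul !block_mxKur !block_mxKdr.
rewrite e1 e2 e3 e4 h1 -mulmxA h2 mulmxDl -!mulmxA h2.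
by rewrite addrA.
Qed.
End H.

Theorem lemma3p2 (K : pzRingType) (m r : nat) (M : 'M[K]_(m + r) -> Prop)
  (M1 : M 1%:M)
  (Mmul : forall x y, M x -> M y -> M (x *m y))
  (Mut : forall x, M x -> block_ut x)
  (n1 n2 : 'M[K]_m * 'M[K]_r)
  (hn1 : in_image M n1) (hn2 : in_image M n2) :
  exists f : 'M[K]_(m + r) -> 'M[K]_(m, r),
    [/\ f 1%:M = 0,
        (forall x y, trace_sub M n1 n2 x -> trace_sub M n1 n2 y ->
           f (x *m y) = f x + f y)
      & (forall x y, trace_sub M n1 n2 x -> trace_sub M n1 n2 y ->
           (f x = f y <-> trace_equiv M n1 n2 x y))].
Proof.
case: n1 hn1 => A1 C1 hn1; case: n2 hn2 => A2 C2 hn2.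
exists (fun x => A1 *m ursubmx x *m C2); split.
- by rewrite (@scalar_mx_block _ m r) block_mxKur mulmx0 mul0mx.
- move=> x y [Mx [hx1 hx2]] [My [hy1 hy2]].
  rewrite /pmul /phi /= in hx1 hx2 hy1 hy2.
  case: hx1 => hx1 _; case: hx2 => _ hx2; case: hy1 => hy1 _; case: hy2 => _ hy2.
  rewrite (mulE (Mut _ Mx) (Mut _ My)) block_mxKur mulmxDr mulmxDl mulmxA hx1.
  by rewrite -!mulmxA hy2 addrC.
- move=> x y [Mx [hx1 hx2]] [My [hy1 hy2]].
  rewrite /pmul /phi /= in hx1 hx2 hy1 hy2.
  case: hx1 => hx1 _; case: hx2 => _ hx2; case: hy1 => hy1 _; case: hy2 => _ hy2.
  split.
  + move=> e m1 m2 Mm1 p1 Mm2 p2; case: p1 => p1 q1; case: p2 => p2 q2.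
    rewrite (key (Mut _ Mm1) (Mut _ Mx) (Mut _ Mm2) p1 q1 p2 q2 hx1 hx2).
    by rewrite (key (Mut _ Mm1) (Mut _ My) (Mut _ Mm2) p1 q1 p2 q2 hy1 hy2) e.
  + move=> e; case: hn1 => m1 [Mm1 p1]; case: hn2 => m2 [Mm2 p2].
    case: p1 => p1 q1; case: p2 => p2 q2.
    have := e m1 m2 Mm1 (f_equal2 pair p1 q1) Mm2 (f_equal2 pair p2 q2).
    rewrite (key (Mut _ Mm1) (Mut _ Mx) (Mut _ Mm2) p1 q1 p2 q2 hx1 hx2).
    rewrite (key (Mut _ Mm1) (Mut _ My) (Mut _ Mm2) p1 q1 p2 q2 hy1 hy2).
    by move/(congr1 ursubmx); rewrite !block_mxKur => /addIr /addrI.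
Qed.
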